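(* Let $\mathcal{D}\subseteq\mathcal{M}^0_+$ be solid and suppose its closure satisfies $\overline{\mathcal{D}}=\mathcal{M}^0_+$. Then for every $\epsilon\in(0,1)$ there exists $\mu\in\mathcal{M}^0_+$ with $\mathbb{P}[\mathrm{d}\mu/\mathrm{d}\mathbb{P}=0]<\epsilon$ such that $a\mu\in\mathcal{D}$ for all $a\in\mathbb{R}_+$.
   Context: $(\Omega,\mathcal{F},\mathbb{P})$ is a probability space. $\mathcal{M}^0_+$ is the convex cone of all $\sigma$-finite nonnegative measures on $(\Omega,\mathcal{F})$ absolutely continuous with respect to $\mathbb{P}$, identified with $\mathbb{L}^0_+$ via $\mu\mapsto\mathrm{d}\mu/\mathrm{d}\mathbb{P}$ and equipped with the topology transported from the topology of convergence in probability on $\mathbb{L}^0_+$ (closure is taken in this topology). $\mathcal{D}\subseteq\mathcal{M}^0_+$ is solid if $\nu\in\mathcal{D}$, $\mu\in\mathcal{M}^0_+$ and $\mu\le\nu$ (i.e. $\mu[A]\le\nu[A]$ for all $A\in\mathcal{F}$) imply $\mu\in\mathcal{D}$. *)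

(* Defs.v *)
From HB Require Import structures.
From mathcomp Require Import all_boot all_order all_algebra.
From mathcomp Require Import all_classical all_reals all_analysis.
Set Implicit Arguments. Unset Strict Implicit. Unset Printing Implicit Defensive.
Import Order.TTheory GRing.Theory Num.Theory.
Local Open Scope classical_set_scope.
Local Open Scope ring_scope.

(* L^0_+ : densities dmu/dP of sigma-finite measures mu << P, represented
   by nonnegative real-valued measurable functions (a.e. classes handled
   through the a.e.-ordering below). *)
Definition L0plus d (T : measurableType d) (R : realType) : set (T -> R) :=
  [set f : T -> R | measurable_fun setT f /\ forall x, 0 <= f x].

Arguments L0plus {d} T R.

(* mu <= nu  iff  dmu/dP <= dnu/dP  P-a.e. *)
Definition solid d (T : measurableType d) (R : realType)
  (P : probability T R) (D : set (T -> R)) : Prop :=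
  forall f g, D g -> L0plus T R f -> {ae P, forall x, f x <= g x} -> D f.

Definition cvg_in_prob d (T : measurableType d) (R : realType)
  (P : probability T R) (u : nat -> T -> R) (f : T -> R) : Prop :=
  forall e : R, 0 < e ->
    (fun n => P [set x | e < `| u n x - f x |]) @ \oo --> (0%R : \bar R).

(* closure of D in the (metrizable) topology of convergence in probability *)
Definition prob_closure d (T : measurableType d) (R : realType)
  (P : probability T R) (D : set (T -> R)) : set (T -> R) :=
  [set f : T -> R | L0plus T R f /\
     exists u : nat -> T -> R, (forall n, D (u n)) /\ cvg_in_prob P u f].

(* Main.v *)
Require Import Defs.
From HB Require Import structures.
From mathcomp Require Import all_boot all_order all_algebra.
From mathcomp Require Import all_classical all_reals all_analysis.
Import Order.TTheory GRing.Theory Num.Theory.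
From mathcomp Require Import lra.
Local Open Scope classical_set_scope.
Local Open Scope ring_scope.

Lemma mset_ge d (T : measurableType d) (R : realType) (f : T -> R) (c : R) :
  measurable_fun setT f -> measurable [set x | c <= f x].
Proof.
move=> mf; have := mf measurableT _ (measurable_itv `[c, +oo[).
rewrite setTI; congr measurable; apply/seteqP; split => x /=;
  by rewrite in_itv /= andbT.
Qed.

Lemma mset_lt d (T : measurableType d) (R : realType) (f : T -> R) (c : R) :
  measurable_fun setT f -> measurable [set x | f x < c].
Proof.
move=> mf; have := mf measurableT _ (measurable_itv `]-oo, c[).
rewrite setTI; congr measurable; apply/seteqP; split => x /=;
  by rewrite in_itv /=.
Qed.

Lemma cvg0_lt (R : realType) (u : nat -> \bar R) (del : R) : 0 < del ->
  u @ \oo --> (0%R : \bar R) -> exists k, (u k < del%:E)%E.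
Proof.
move=> d0 /(_ [set y | (y < del%:E)%E]) H.
have : \forall k \near \oo, (u k < del%:E)%E.
  apply: H. apply: lt_nbhsl. by rewrite -lte_fin in d0.
move=> [N _ HN]. exists N. by apply: HN => /=.
Qed.

Theorem lemmaA1 (d : measure_display) (T : measurableType d) (R : realType)
  (P : probability T R) (D : set (T -> R)) :
  D `<=` L0plus T R ->
  solid P D ->
  prob_closure P D = L0plus T R ->
  forall eps : R, 0 < eps < 1 ->
  exists mu : T -> R, L0plus T R mu /\
    (P [set x | mu x = 0%R] < eps%:E)%E /\
    (forall a : R, 0 <= a -> D (fun x => (a * mu x)%R)).
Proof.
move=> HD HS Hcl eps /andP[e0 e1].
pose del (n : nat) : R := (eps / 2) / (2 ^ n.+1)%:R.
have del0 n : 0 < del n by rewrite /del divr_gt0 // ?divr_gt0 // ltr0n expn_gt0.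
have step (n : nat) : exists g, D g /\ (P [set x | (g x < n%:R)%R] < (del n)%:E)%E.
  have : L0plus T R (fun _ => (n + 2)%:R) by split => // x; exact: ler0n.
  rewrite -Hcl => -[_ [u [Du cu]]].
  have [k Hk] := @cvg0_lt R _ _ (del0 n) (cu 1 ltr01).
  exists (u k); split => //.
  have [mu0 _] := HD _ (Du k).
  apply: le_lt_trans Hk; apply: le_measure; rewrite ?inE.
  - exact: mset_lt.
  - have mf : measurable_fun setT (fun x => `|u k x - (n + 2)%:R|).
      apply: measurableT_comp => //; exact: measurable_realfun.measurable_funB.
    have := mf measurableT _ (measurable_itv `]1, +oo[).
    rewrite setTI; congr measurable; apply/seteqP; split => x /=;
      by rewrite in_itv /= andbT.
  - move=> x /= lt; rewrite ler0_norm; last by rewrite natrD; lra.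
    rewrite natrD; lra.
have [g Hg] := choice step.
pose B := \bigcap_n [set x | (n%:R <= g n x)%R].
have mg n : measurable_fun setT (g n) by have [] := HD _ (proj1 (Hg n)).
have g0 n x : 0 <= g n x by have [_] := HD _ (proj1 (Hg n)).
have mB : measurable B.
  by apply: bigcapT_measurable => n; exact: mset_ge.
exists (\1_B); split; first by split; [exact: measurable_realfun.measurable_indic | move=> x; rewrite indicE ler0n].
split.
  have mA : measurable [set x | \1_B x = 0 :> R].
    have := @measurable_realfun.measurable_indic _ _ R setT B mB measurableT _ (measurable_set1 (0:R)).
    by rewrite setTI.
  have Hsub : [set x | \1_B x = 0 :> R] `<=` \bigcup_n [set x | (g n x < n%:R)%R].
    move=> x /=; rewrite indicE; have [Bx|nBx] := boolP (x \in B).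
      by move/eqP; rewrite oner_eq0.
    move=> _; move: nBx; rewrite notin_setE => nBx.
    apply: contrapT => H; apply: nBx => n _ /=; rewrite leNgt; apply/negP => ltn.
    by apply: H; exists n.
  have := measure_sigma_subadditive P (fun n => @mset_lt _ _ _ (g n) n%:R (mg n)) mA Hsub.
  move/le_lt_trans; apply.
  apply: (@le_lt_trans _ _ (\sum_(0 <= n <oo) ((0 : \bar R) + (del n)%:E))%E).
    apply: lee_nneseries => [n _ _|n _]; first exact: measure_ge0.
    by rewrite add0e; apply: ltW; exact: (proj2 (Hg n)).
  apply: (@le_lt_trans _ _ ((\sum_(0 <= n <oo) (0 : \bar R)) + (eps/2)%:E)%E).
    by apply: epsilon_trick => //; apply: ltW; rewrite divr_gt0.
  by rewrite eseries0 // add0e lte_fin; lra.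
move=> a a0.
pose n := (Num.truncn a).+1.
have an : a < n%:R by exact: truncnS_gt.
apply: (HS _ (g n) (proj1 (Hg n))).
  split; last by move=> x; rewrite indicE mulr_ge0.
  exact: (measurable_realfun.measurable_funM (measurable_cst a) (@measurable_realfun.measurable_indic _ _ R setT B mB)).
apply: aeW => x /=; rewrite indicE; have [Bx|nBx] := boolP (x \in B).
  rewrite mulr1; apply: (le_trans (ltW an)).
  by move: Bx; rewrite inE => /(_ n I).
by rewrite mulr0.
Qed.
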